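(* Let $w\in S_n$. Then $|R(w)|=|B(w)|\cdot|C(w)|$ if and only if $|B(w)|=1$ or $|C(w)|=1$.
   Context: $S_n$ is generated by the adjacent transpositions $s_1,\dots,s_{n-1}$. A reduced word for $w$ is a word $i_1\cdots i_k$ with $w=s_{i_1}\cdots s_{i_k}$ and $k$ minimal; $R(w)$ is the set of reduced words. A braid move replaces a factor (consecutive letters) $i(i+1)i$ by $(i+1)i(i+1)$ or vice versa; a commutation move replaces a factor $ij$ with $|i-j|>1$ by $ji$. $B(w)$ (resp. $C(w)$) is the set of equivalence classes of $R(w)$ under sequences of braid moves (resp. commutation moves). *)

(* Defs.v *)
From Stdlib Require Import ClassicalEpsilon Relations.
From mathcomp Require Import all_boot all_fingroup.
Set Implicit Arguments. Unset Strict Implicit. Unset Printing Implicit Defensive.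

(* We work in S_{n+1} = 'S_n.+1 (permutations of 'I_n.+1 = {0,...,n}).
   Letters are i : 'I_n; the letter i stands for the adjacent transposition
   exchanging i and i+1 (this is s_{i+1} in 1-based notation; the shift is
   harmless since braid/commutation moves only involve differences). *)

Definition adj (n : nat) (i : 'I_n) : 'S_n.+1 :=
  tperm (widen_ord (leqnSn n) i) (lift ord0 i).

Definition prodw (n : nat) (t : seq 'I_n) : 'S_n.+1 :=
  (\prod_(i <- t) adj i)%g.

Definition has_word (n : nat) (w : 'S_n.+1) (k : nat) : Prop :=
  exists t : k.-tuple 'I_n, prodw (tval t) = w.

Definition ell (n : nat) (w : 'S_n.+1) : nat :=
  epsilon (inhabits 0%N)
    (fun k => has_word w k /\ forall j, has_word w j -> (k <= j)%N).

Definition Rw (n : nat) (w : 'S_n.+1) : {set (ell w).-tuple 'I_n} :=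
  [set t | prodw (tval t) == w].

Definition braid_step (x y : seq nat) : Prop :=
  exists (a b : seq nat) (i : nat),
    (x = a ++ [:: i; i.+1; i] ++ b /\ y = a ++ [:: i.+1; i; i.+1] ++ b) \/
    (x = a ++ [:: i.+1; i; i.+1] ++ b /\ y = a ++ [:: i; i.+1; i] ++ b).

Definition comm_step (x y : seq nat) : Prop :=
  exists (a b : seq nat) (i j : nat),
    (i.+1 < j \/ j.+1 < i)%N /\ x = a ++ [:: i; j] ++ b /\ y = a ++ [:: j; i] ++ b.

Definition braid_equiv (x y : seq nat) : Prop := clos_refl_trans _ braid_step x y.
Definition comm_equiv (x y : seq nat) : Prop := clos_refl_trans _ comm_step x y.

Definition pb (P : Prop) : bool :=
  if excluded_middle_informative P then true else false.

Definition classes (n k : nat) (A : {set k.-tuple 'I_n})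
    (r : seq nat -> seq nat -> Prop) : {set {set k.-tuple 'I_n}} :=
  [set [set u in A | pb (r (map val (tval t)) (map val (tval u)))] | t in A].

Definition Bw (n : nat) (w : 'S_n.+1) := classes (Rw w) braid_equiv.
Definition Cw (n : nat) (w : 'S_n.+1) := classes (Rw w) comm_equiv.

(* Main.v *)
Require Import Defs.
From mathcomp Require Import all_boot all_fingroup.
From Stdlib Require Import Relations ClassicalEpsilon.
From mathcomp Require Import zify.
Set Warnings "-notation-overridden".
Set Implicit Arguments. Unset Strict Implicit. Unset Printing Implicit Defensive.


Definition sw (i v : nat) : nat := if v == i then i.+1 else if v == i.+1 then i else v.

Definition adjn (n i : nat) : 'S_n.+1 := if insub i is Some o then adj o else 1%g.
Definition prodn (n : nat) (x : seq nat) : 'S_n.+1 := (\prod_(i <- x) adjn n i)%g.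

Lemma prodw_prodn n (t : seq 'I_n) : prodw t = prodn n (map val t).
Proof. rewrite /prodw /prodn big_map; apply: eq_bigr => i _; by rewrite /adjn valK. Qed.

Lemma prodn_cat n x y : prodn n (x ++ y) = (prodn n x * prodn n y)%g.
Proof. by rewrite /prodn big_cat. Qed.

Lemma prodn_cons n i x : prodn n (i :: x) = (adjn n i * prodn n x)%g.
Proof. by rewrite /prodn big_cons. Qed.

Lemma prodn_nil n : prodn n [::] = 1%g.
Proof. by rewrite /prodn big_nil. Qed.

Lemma adjn_val n i (v : 'I_n.+1) : (adjn n i v : nat) = if i < n then sw i v else v.
Proof.
rewrite /adjn; case: insubP => [o hi <-|/negPf ->]; last by rewrite perm1.
rewrite ltn_ord /adj /sw; case: tpermP => [->|->|h1 h2] /=.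
- by rewrite eqxx.
- by rewrite (gtn_eqF (ltnSn _)) eqxx.
- have e1 : (val v == val o) = false.
    by apply/negP => /eqP e; apply: h1; apply: val_inj.
  have e2 : (val v == (val o).+1) = false.
    by apply/negP => /eqP e; apply: h2; apply: val_inj.
  by rewrite e1 e2.
Qed.

Lemma prodn_val n x (v : 'I_n.+1) : all (fun i => i < n) x ->
  (prodn n x v : nat) = foldl (fun u i => sw i u) v x.
Proof.
elim: x v => [|i x IH] v /=; first by rewrite prodn_nil perm1.
move=> /andP[hi hx]; rewrite prodn_cons permM IH // adjn_val hi //.
Qed.

Lemma swspec i v : (sw i v = i.+1 /\ v = i) \/ (sw i v = i /\ v = i.+1) \/ (sw i v = v /\ v <> i /\ v <> i.+1).
Proof. rewrite /sw; case: (eqVneq v i) => [->|h1]; first by left. case: (eqVneq v i.+1) => [->|h2]; first by right; left.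
right; right; split => //; split; exact/eqP. Qed.
Ltac swcase := repeat match goal with |- context [sw ?i ?v] =>
  lazymatch v with context [sw _ _] => fail | _ =>
  let h := fresh in let h1 := fresh in let h2 := fresh in
  destruct (swspec i v) as [[h h1]|[[h h1]|[h [h1 h2]]]]; rewrite h; clear h end end.

Lemma swK i : cancel (sw i) (sw i).
Proof. move=> v; swcase; lia. Qed.

Lemma perm_val_eq n (p q : 'S_n.+1) : (forall v, val (p v) = val (q v)) -> p = q.
Proof. move=> h; apply/permP => v; apply: val_inj; exact: h. Qed.
Lemma perm_ord_eq n (p q : 'S_n.+1) : (forall v, (p v : nat) = q v) -> p = q.
Proof. move=> h; apply/permP => v; apply: val_inj; exact: h. Qed.

Lemma sw_comm a b v : a.+1 < b \/ b.+1 < a -> sw a (sw b v) = sw b (sw a v).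
Proof. move=> h; swcase; lia. Qed.

Lemma sw_braidH i j v : j = i.+1 -> sw i (sw j (sw i v)) = sw j (sw i (sw j v)).
Proof. move=> ->; swcase; lia. Qed.

Definition fw (x : seq nat) (v : nat) := foldl (fun u i => sw i u) v x.

Lemma prodn_eqw n x y : all (fun i => i < n) x -> all (fun i => i < n) y ->
  (forall v, fw x v = fw y v) -> prodn n x = prodn n y.
Proof. move=> hx hy h; apply: perm_ord_eq => v; rewrite !prodn_val //; exact: h. Qed.

Lemma fw_cat x y v : fw (x ++ y) v = fw y (fw x v).
Proof. by rewrite /fw foldl_cat. Qed.

Lemma fw_cons i x v : fw (i :: x) v = fw x (sw i v).
Proof. by []. Qed.

Lemma fw1 a v : fw [:: a] v = sw a v. Proof. by []. Qed.
Lemma fw0 v : fw [::] v = v. Proof. by []. Qed.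

Lemma fw_comm m D v : all (fun a => a.+1 < m) D -> fw D (sw m v) = sw m (fw D v).
Proof.
elim: D v => [|a D IH] v //= /andP[ha hD].
rewrite -IH //; congr (fw D _); swcase; lia.
Qed.

Lemma adjnK n a : (adjn n a * adjn n a)%g = 1%g.
Proof.
case: (ltnP a n) => ha.
- apply: perm_ord_eq => v; rewrite permM !adjn_val ha perm1 swK //.
- apply: perm_ord_eq => v; rewrite permM !adjn_val ltnNge ha /= perm1 //.
Qed.

Lemma prodn_aa n u a v : prodn n (u ++ a :: a :: v) = prodn n (u ++ v).
Proof. rewrite !prodn_cat !prodn_cons; congr (_ * _)%g; by rewrite mulgA adjnK mul1g. Qed.

Definition invp n (p : 'S_n.+1) : nat :=
  #|[set x : 'I_n.+1 * 'I_n.+1 | (x.1 < x.2) && (p x.2 < p x.1)]|.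

Lemma invp1 n : invp (1 : 'S_n.+1)%g = 0.
Proof.
apply/eqP; rewrite cards_eq0; apply/eqP/setP => -[a b]; rewrite !inE /= !perm1.
by apply/negP => /andP[h1 h2]; move: (ltn_trans h1 h2); rewrite ltnn.
Qed.

Lemma invp_step n (p : 'S_n.+1) i (a b : 'I_n.+1) : i < n -> a < b ->
  (p a : nat) = i -> (p b : nat) = i.+1 -> invp (p * adjn n i)%g = (invp p).+1.
Proof.
move=> hi hab hpa hpb; rewrite /invp.
have ev : forall (z c : 'I_n.+1) j, (p c : nat) = j -> ((p z : nat) == j) = (z == c).
  move=> z c j hc; apply/eqP/eqP => [h|->//]; apply: (perm_inj (s:=p)); apply: val_inj.
  by rewrite /= h hc.
have -> : [set x : 'I_n.+1 * 'I_n.+1 | (x.1 < x.2) && ((p * adjn n i)%g x.2 < (p * adjn n i)%g x.1)] =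
  (a, b) |: [set x : 'I_n.+1 * 'I_n.+1 | (x.1 < x.2) && (p x.2 < p x.1)].
  apply/setP => -[x y]; rewrite !inE /= !permM xpair_eqE !adjn_val hi /sw.
  have -> : (x == a) = ((p x : nat) == i).
    by apply/eqP/eqP => [->//|h]; apply: (perm_inj (s:=p)); apply: val_inj; rewrite /= h hpa.
  have -> : (y == b) = ((p y : nat) == i.+1).
    by apply/eqP/eqP => [->//|h]; apply: (perm_inj (s:=p)); apply: val_inj; rewrite /= h hpb.
  have h1 : (p x : nat) = i -> (x : nat) = a.
    by move=> h; congr val; apply: (perm_inj (s:=p)); apply: val_inj; rewrite /= h hpa.
  have h2 : (p y : nat) = i.+1 -> (y : nat) = b.
    by move=> h; congr val; apply: (perm_inj (s:=p)); apply: val_inj; rewrite /= h hpb.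
  have h3 : (p x : nat) = i.+1 -> (x : nat) = b.
    by move=> h; congr val; apply: (perm_inj (s:=p)); apply: val_inj; rewrite /= h hpb.
  have h4 : (p y : nat) = i -> (y : nat) = a.
    by move=> h; congr val; apply: (perm_inj (s:=p)); apply: val_inj; rewrite /= h hpa.
  have h5 : (x : nat) = y -> (p x : nat) = p y.
    by move=> h; have -> : x = y by apply: val_inj.
  move: h1 h2 h3 h4 h5 hab.
  move: (p x : nat) (p y : nat) (x : nat) (y : nat) (a : nat) (b : nat) => u w X Y A B.
  case: (eqVneq u i) => e1; case: (eqVneq w i.+1) => e2; case: (eqVneq u i.+1) => e3; case: (eqVneq w i) => e4; rewrite /=; lia.
have hn : (a, b) \notin [set x : 'I_n.+1 * 'I_n.+1 | (x.1 < x.2) && (p x.2 < p x.1)].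
  rewrite !inE /= negb_and; apply/orP; right; rewrite -leqNgt.
  rewrite hpa hpb; lia.
by rewrite cardsU1 hn.
Qed.

Lemma adjn_out n i : n <= i -> adjn n i = 1%g.
Proof. by move=> h; rewrite /adjn insubN // -leqNgt. Qed.

Lemma invp_pm n (p : 'S_n.+1) i : i < n ->
  invp (p * adjn n i)%g = (invp p).+1 \/ invp p = (invp (p * adjn n i)%g).+1.
Proof.
move=> hi.
pose I : 'I_n.+1 := inord i. pose I1 : 'I_n.+1 := inord i.+1.
have vI : (I : nat) = i by rewrite /I inordK //; lia.
have vI1 : (I1 : nat) = i.+1 by rewrite /I1 inordK //; lia.
pose a := (p^-1)%g I. pose b := (p^-1)%g I1.
have hpa : (p a : nat) = i by rewrite /a permKV.
have hpb : (p b : nat) = i.+1 by rewrite /b permKV.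
have hab : (a : nat) != b.
  apply/negP => /eqP h; have e : a = b by apply: val_inj.
  by move: hpa; rewrite e hpb; lia.
case: (ltngtP a b) => h; last by move: hab; rewrite h eqxx.
- left; exact: invp_step h hpa hpb.
- right; set q := (p * adjn n i)%g.
  have hq : (q * adjn n i)%g = p by rewrite /q -mulgA adjnK mulg1.
  have hqb : (q b : nat) = i by rewrite /q permM adjn_val hi hpb /sw (gtn_eqF (ltnSn _)) eqxx.
  have hqa : (q a : nat) = i.+1 by rewrite /q permM adjn_val hi hpa /sw eqxx.
  by rewrite -{1}hq (invp_step hi h hqb hqa).
Qed.

Lemma prodn_rcons n x i : prodn n (rcons x i) = (prodn n x * adjn n i)%g.
Proof. by rewrite -cats1 prodn_cat prodn_cons prodn_nil mulg1. Qed.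

Lemma invp_le n x : invp (prodn n x) <= size x.
Proof.
elim/last_ind: x => [|x i IH]; first by rewrite prodn_nil invp1.
rewrite prodn_rcons size_rcons; case: (ltnP i n) => hi.
- case: (invp_pm (prodn n x) hi) => e; rewrite ?e; lia.
- by rewrite adjn_out // mulg1; lia.
Qed.

Lemma no_aa n u a v : size (u ++ a :: a :: v) = invp (prodn n (u ++ a :: a :: v)) -> False.
Proof.
rewrite prodn_aa => h; have := invp_le n (u ++ v); rewrite -h !size_cat /=; lia.
Qed.

Definition G (k L v : nat) := if v == k + L then k else if (k <= v) && (v < k + L) then v.+1 else v.

Lemma fw_rev s v : fw (rev s) v = foldr sw v s.
Proof. by rewrite /fw foldl_rev. Qed.

Lemma Gspec k L v : (v = k + L /\ G k L v = k) \/ ((k <= v < k + L) /\ G k L v = v.+1) \/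
  ((v < k \/ k + L < v) /\ G k L v = v).
Proof.
rewrite /G; case: (eqVneq v (k + L)) => [->|h]; first by left.
case: ifP => h2; [right; left | right; right]; split => //; move/eqP: h => h; move/negbT: h2; lia.
Qed.

Lemma foldr_iota k L v : foldr sw v (iota k L) = G k L v.
Proof.
elim: L k v => [|L IH] k v /=.
  case: (Gspec k 0 v) => [[-> ->]|[[h ->]|[h ->]]] //; lia.
rewrite IH; case: (Gspec k.+1 L v) => [[h1 ->]|[[h1 ->]|[h1 ->]]];
  case: (Gspec k L.+1 v) => [[h2 ->]|[[h2 ->]|[h2 ->]]]; swcase; lia.
Qed.

Definition br (a b c : nat) : bool := (a == c) && ((b == a.+1) || (a == b.+1)).
Fixpoint bf (s : seq nat) : bool :=
  if s is a :: t then (if t is b :: c :: _ then ~~ br a b c else true) && bf t else true.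
Fixpoint cf (s : seq nat) : bool :=
  if s is a :: t then (if t is b :: _ then (a <= b.+1) && (b <= a.+1) else true) && cf t else true.

Lemma bf_iota k j s : bf s ->
  (forall a s', s = a :: s' -> 1 < j -> a != k + j - 2) ->
  (forall a b s', s = a :: b :: s' -> 0 < j -> b != k + j - 1) ->
  bf (iota k j ++ s).
Proof.
elim: j k => [|j IH] k hs h1 h2 //=.
apply/andP; split; last first.
  apply: IH => //.
  - move=> a s' e hj; have := h1 a s' e; rewrite addSnnS; apply; lia.
  - move=> a b s' e hj; have := h2 a b s' e; rewrite addSnnS; apply; lia.
case: j IH h1 h2 => [|[|j]] _ h1 h2 /=.
- case: s hs h1 h2 => [|a [|b s']] //= hs h1 h2.
  have := h2 a b s' erefl isT; rewrite /br; apply: contra => /andP[/eqP e _]; apply/eqP; lia.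
- case: s hs h1 h2 => [|a s'] //= hs h1 h2.
  have := h1 a s' erefl isT; rewrite /br; apply: contra => /andP[/eqP e _]; apply/eqP; lia.
- rewrite /br; apply/negP => /andP[/eqP]; lia.
Qed.

Lemma bf_braid a b i : bf (a ++ [:: i; i.+1; i] ++ b) = false.
Proof.
elim: a => [|c a IH] /=; first by rewrite /br !eqxx.
by rewrite IH andbF.
Qed.

Lemma bf_braid' a b i : bf (a ++ [:: i.+1; i; i.+1] ++ b) = false.
Proof.
elim: a => [|c a IH] /=; first by rewrite /br !eqxx orbT.
by rewrite IH andbF.
Qed.

Lemma cf_comm a b i j : (i.+1 < j \/ j.+1 < i) -> cf (a ++ [:: i; j] ++ b) = false.
Proof.
move=> h; elim: a => [|c a IH] /=; last by rewrite IH andbF.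
apply/negbTE/negP; case/and3P => /andP[h1 h2] _ _; lia.
Qed.

Lemma bf_no_step r y : bf r -> ~ braid_step (rev r) y.
Proof.
move=> hb [a [b [i H]]]; case: H => [[e _]|[e _]].
- have : r = rev b ++ [:: i; i.+1; i] ++ rev a by rewrite -(revK r) e !rev_cat -catA.
  by move=> er; move: hb; rewrite er bf_braid.
- have : r = rev b ++ [:: i.+1; i; i.+1] ++ rev a by rewrite -(revK r) e !rev_cat -catA.
  by move=> er; move: hb; rewrite er bf_braid'.
Qed.

Lemma cf_no_step r y : cf r -> ~ comm_step (rev r) y.
Proof.
move=> hc [a [b [i [j [hij [e _]]]]]].
have : r = rev b ++ [:: j; i] ++ rev a by rewrite -(revK r) e !rev_cat -catA.
move=> er; move: hc; rewrite er cf_comm //; case: hij; [right|left] => //.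
Qed.

Lemma seq_tuple n k (x : seq nat) : size x = k -> all (fun i => i < n) x ->
  exists t : k.-tuple 'I_n, map val t = x.
Proof.
move=> hs ha.
have hm : map val (pmap insub x : seq 'I_n) = x.
  elim: x {hs} ha => [|i x IH] //= /andP[hi hx].
  by rewrite insubT /= IH.
have hs' : size (pmap insub x : seq 'I_n) == k by rewrite -(size_map val) hm hs.
by exists (Tuple hs').
Qed.

Lemma ell_eq n (w : 'S_n.+1) : (exists x, [/\ prodn n x = w, size x = invp w & all (fun i => i < n) x]) ->
  ell w = invp w.
Proof.
move=> [x [hx hs ha]].
have hw : has_word w (invp w).
  have [t ht] := seq_tuple hs ha; exists t; by rewrite prodw_prodn ht.
have lb : forall j, has_word w j -> invp w <= j.
  move=> j [t ht]; rewrite -ht prodw_prodn; have := invp_le n (map val t).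
  by rewrite size_map size_tuple.
have ex : exists k, has_word w k /\ forall j, has_word w j -> k <= j.
  by exists (invp w); split.
have [h1 h2] := epsilon_spec (inhabits 0) _ ex.
rewrite /ell; apply/eqP; rewrite eqn_leq; apply/andP; split.
- exact: h2.
- exact: lb.
Qed.

Lemma all_cons' (T : Type) (P : pred T) a s : all P (a :: s) = P a && all P s.
Proof. by []. Qed.

Lemma rev_iotaS k j : rev (iota k j.+1) = (k + j) :: rev (iota k j).
Proof. by rewrite -addn1 iotaD rev_cat. Qed.

Lemma all_iota (P : pred nat) k j : (forall a, k <= a < k + j -> P a) -> all P (iota k j).
Proof. move=> h; apply/allP => a; rewrite mem_iota => /h; exact. Qed.

Lemma bf_cons a s : bf (a :: s) = (if s is b :: c :: _ then ~~ br a b c else true) && bf s.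
Proof. by []. Qed.

Definition exc (m : nat) (r : seq nat) := exists i, i.+1 < m /\ r = [:: i; i.+1; i].

Lemma step_words n m k r' : m < n -> k <= m.+1 -> all (fun a => a < m) r' ->
  (forall u a v, rev r' = u ++ a :: a :: v -> False) -> (bf r' \/ exc m r') ->
  exists r, [/\ prodn n (rev r) = prodn n (rev r' ++ rev (iota k (m.+1 - k))),
    size r = size r' + (m.+1 - k), all (fun a => a < m.+1) r & bf r \/ exc m.+1 r].
Proof.
move=> hmn hk hr' naa hbe.
have hr'n : all (fun a => a < n) r'.
  by apply/allP => a /(allP hr') /= h; lia.
have hr'1 : all (fun a => a < m.+1) r'.
  by apply/allP => a /(allP hr') /= h; lia.
case eL: (m.+1 - k) => [|[|j]].
-
  exists r'; split => //; [by rewrite /= cats0 | by rewrite addn0 | by case: hbe => [h|[i [hi e]]]; [left|right; exists i; split => //; lia]].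
-
  have ek : k = m by lia. subst k.
  case: hbe => [hb|[i [hi e]]].
  + exists (m :: r'); split => //=.
    * by rewrite rev_cons cats1.
    * by rewrite addn1.
    * by rewrite ltnSn.
    * left; rewrite hb andbT; case: r' hr' {hb naa hr'n hr'1} => [|b [|c s]] //= /and3P[_ hc _].
      rewrite /br; lia.
  + subst r'; exists [:: i; m; i.+1; i]; split => //=.
    * apply: prodn_eqw => /=; try (rewrite ?andbT; apply/and4P; split; lia).
      move=> v; rewrite /fw /= (@sw_comm i m) //; lia.
    * rewrite ?andbT; apply/and4P; split; lia.
    * left; rewrite /br; lia.
-
  have hkj : k + j.+1 = m by lia.
  have hm0 : 0 < m by lia.
  have erv : rev (iota k j.+2) = [:: m; m.-1] ++ rev (iota k j).
    by rewrite !rev_iotaS; congr (_ :: _ :: _); lia.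
  have hD : all (fun a => a.+1 < m) (rev (iota k j)).
    by rewrite all_rev; apply: all_iota => a ha; lia.
  have hDn : all (fun a => a < n) (rev (iota k j)).
    by rewrite all_rev; apply: all_iota => a ha; lia.
  have hIn : forall l, l <= j.+2 -> all (fun a => a < n) (rev (iota k l)).
    by move=> l hl; rewrite all_rev; apply: all_iota => a ha; lia.
  have hIn' : forall l, l <= j.+2 -> all (fun a => a < n) (iota k l).
    by move=> l hl; apply: all_iota => a ha; lia.
  have hI1 : forall l, l <= j.+2 -> all (fun a => a < m.+1) (iota k l).
    by move=> l hl; apply: all_iota => a ha; lia.
  case: hbe => [hb|[i [hi er']]].
  +
    have [[r'' er']|hne] : (exists r'', r' = m.-1 :: r'') \/ (forall r'', r' <> m.-1 :: r'').
      case: r' {hr' naa hr'n hr'1 hb} => [|a r'']; first by right.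
      case: (eqVneq a m.-1) => [->|h]; first by left; exists r''.
      by right => r3 [e _]; move: h; rewrite e eqxx.
    *
      subst r'.
      have hb'' : bf r'' by move: hb; rewrite bf_cons => /andP[].
      have hr'' : all (fun a => a < m) r'' by move: hr' => /= /andP[].
      have nb : forall b r3, r'' = b :: r3 -> b != m.-1.
        move=> b r3 e; apply/negP => /eqP eb; apply: (naa (rev r3) b [::]).
        by rewrite e eb /= rev_cons rev_cons -!cats1 -catA.
      case: j hkj erv hD hDn hIn hIn' hI1 eL => [|j'] hkj erv hD hDn hIn hIn' hI1 eL.
      -
        clear hr'1 naa hb hr'.
        case: r'' hb'' hr'' nb hr'n => [|a r3] hb'' hr'' nb hr'n.
        -- exists [:: m.-1; m.-1.+1; m.-1]; split.
           ++ by rewrite prednK // erv.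
           ++ by [].
           ++ rewrite prednK //=; lia.
           ++ by right; exists m.-1; split => //; lia.
        -- have ha : a.+1 < m by have := nb a r3 erefl; move: hr'' => /= /andP[h _]; lia.
           have hr3n : all (fun a => a < n) r3 by move: hr'n => /= /and3P[].
           exists [:: m, m.-1, a, m & r3]; split.
           ++ apply: prodn_eqw.
              ** rewrite all_rev /= hr3n; lia.
              ** rewrite erv all_cat !all_rev /= hr3n; lia.
              ** move=> v; rewrite erv /= !rev_cons -!cats1 -!catA !fw_cat /=.
                 move: (fw (rev r3) v) => u; rewrite /fw /=.
                 rewrite (@sw_braidH m.-1 m) ?(@sw_comm m a) //; lia.
           ++ by rewrite /= addnC.
           ++ move: hr'' => /= /andP[h1 h2].
              have h3 : all (fun x => x < m.+1) r3 by apply/allP => x /(allP h2) /=; lia.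
              rewrite h3; lia.
           ++ left; rewrite /=; move: hb'' hr''; clear nb hr3n hr'n; case: r3 => [|b [|c r4]] /=;
                rewrite /br; try lia.
      -
        clear hr'1 naa hb hr' hr'n.
        exists (m :: (iota k j'.+2 ++ m :: r'')); split.
        -- apply: prodn_eqw.
           ++ have h3 : all (fun x => x < n) r'' by apply/allP => x /(allP hr'') /=; lia.
              rewrite all_rev all_cons' all_cat hIn' // all_cons' h3 /=; lia.
           ++ have h3 : all (fun x => x < n) r'' by apply/allP => x /(allP hr'') /=; lia.
              rewrite all_cat all_rev all_cons' h3 hIn //; lia.
           ++ move=> v; rewrite rev_cons rev_cat rev_cons rev_cons rev_iotaS.
              rewrite -!cats1 -!catA !fw_cat; move: (fw (rev r'') v) => u.
              rewrite erv.
              have -> : k + j'.+1 = m.-1 by lia.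
              rewrite fw_cat !fw_cons !fw0 -fw_comm //.
              congr (fw _ _); rewrite (@sw_braidH m.-1 m) //; lia.
        -- by rewrite /= size_cat size_iota /=; lia.
        -- have h3 : all (fun x => x < m.+1) r'' by apply/allP => x /(allP hr'') /=; lia.
           rewrite all_cons' all_cat hI1 // all_cons' h3; lia.
        -- left; rewrite bf_cons; apply/andP; split.
           ++ rewrite /= /br; lia.
           ++ apply: bf_iota.
              ** rewrite bf_cons hb'' andbT; case: r'' hr'' {hb'' nb} => [|b [|c r4]] //= /and3P[_ hc _].
                 rewrite /br; lia.
              ** move=> x s' [<- _] _; apply/eqP; lia.
              ** move=> x b s' [_ e] _; subst r''; have := nb b s' erefl; lia.
    *
      exists (iota k j.+2 ++ r'); split.
      -- by rewrite rev_cat.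
      -- by rewrite size_cat size_iota addnC.
      -- by rewrite all_cat hI1 // hr'1.
      -- left; apply: bf_iota => //.
         ++ move=> x s' e _; apply/eqP => ex; apply: (hne s'); rewrite e ex; congr (_ :: _); lia.
         ++ move=> x b s' e _; move: hr'; rewrite e /= => /and3P[_ hb' _]; apply/eqP; lia.
  +
    subst r'.
    case: (ltngtP i.+2 m) => him.
    * exists (iota k j.+1 ++ [:: i; m; i.+1; i]); split.
      -- apply: prodn_eqw.
         ++ rewrite rev_cat all_cat hIn //=; lia.
         ++ rewrite all_cat hIn //=; lia.
         ++ move=> v; rewrite rev_cat erv rev_iotaS.
            have -> : k + j = m.-1 by lia.
            have -> : rev [:: i; m; i.+1; i] = [:: i; i.+1; m; i] by [].
            have -> : rev [:: i; i.+1; i] = [:: i; i.+1; i] by [].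
            rewrite !fw_cat fw_cons [fw ([:: m; m.-1] ++ _) _]fw_cat.
            congr (fw _ _); rewrite /fw /= (@sw_comm i m) //; lia.
      -- by rewrite size_cat size_iota /=; lia.
      -- rewrite all_cat hI1 //=; lia.
      -- left; apply: bf_iota.
         ++ rewrite /= /br; lia.
         ++ move=> x s' [<- _] _; apply/eqP; lia.
         ++ move=> x b s' [_ <- _] _; apply/eqP; lia.
    * lia.
    * exists (iota k j ++ [:: i.+2; i.+1; i; i.+2; i.+1]); split.
      -- apply: prodn_eqw.
         ++ rewrite rev_cat all_cat hDn /=; lia.
         ++ rewrite all_cat hIn //=; lia.
         ++ move=> v; rewrite rev_cat erv.
            have -> : rev [:: i.+2; i.+1; i; i.+2; i.+1] = [:: i.+1; i.+2; i; i.+1; i.+2] by [].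
            have -> : rev [:: i; i.+1; i] = [:: i; i.+1; i] by [].
            rewrite !fw_cat [fw ([:: m; m.-1] ++ _) _]fw_cat.
            congr (fw _ _); have -> : m = i.+2 by lia.
            rewrite /fw /= (@sw_braidH i i.+1 v) // (@sw_braidH i.+1 i.+2 (sw i (sw i.+1 v))) //.
            rewrite (@sw_comm i.+2 i (sw i.+1 v)) //; lia.
      -- by rewrite size_cat size_iota /=; lia.
      -- rewrite all_cat hI1 //=; lia.
      -- left; apply: bf_iota.
         ++ rewrite /= /br; lia.
         ++ move=> x s' [<- _] _; apply/eqP; lia.
         ++ move=> x b s' [_ <- _] _; apply/eqP; lia.
Qed.

Lemma prodn_chain_val n k L (v : 'I_n.+1) : k + L <= n ->
  (prodn n (rev (iota k L)) v : nat) = G k L v.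
Proof.
move=> h; rewrite prodn_val; last by rewrite all_rev; apply: all_iota => a ha; lia.
by rewrite -foldr_iota -fw_rev.
Qed.

Lemma chain_inv n m (q : 'S_n.+1) : m < n -> (forall v : 'I_n.+1, m < v -> q v = v) ->
  forall l, l <= m.+1 -> invp (q * prodn n (rev (iota (m.+1 - l) l)))%g = invp q + l.
Proof.
move=> hmn hq; elim=> [|l IH] hl.
  by rewrite /= prodn_nil mulg1 addn0.
have e : rev (iota (m.+1 - l.+1) l.+1) = rcons (rev (iota (m.+1 - l) l)) (m - l).
  have -> : m.+1 - l.+1 = m - l by lia.
  rewrite /= rev_cons; congr (rcons (rev (iota _ _)) _); lia.
rewrite e prodn_rcons mulgA.
pose I : 'I_n.+1 := inord (m - l). pose B : 'I_n.+1 := inord m.+1.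
have vI : (I : nat) = m - l by rewrite /I inordK //; lia.
have vB : (B : nat) = m.+1 by rewrite /B inordK //; lia.
pose a := (q^-1)%g I.
have hqa : q a = I by rewrite /a permKV.
have ha : (a : nat) <= m.
  rewrite leqNgt; apply/negP => h; have := hq a h; rewrite hqa => e2.
  by move: vI; rewrite e2; lia.
rewrite (@invp_step n _ (m - l) a B); first by rewrite IH; [lia | lia].
- lia.
- by rewrite vB; lia.
- rewrite permM prodn_chain_val; last by lia.
  rewrite hqa vI /G; case: ifP => [/eqP|_]; first lia.
  by case: ifP => // /andP[h1 h2]; lia.
- rewrite permM prodn_chain_val; last by lia.
  rewrite hq; last by rewrite vB.
  rewrite vB /G; case: ifP => [/eqP|/eqP]; lia.
Qed.

Lemma construct n m : m <= n -> forall p : 'S_n.+1, (forall v : 'I_n.+1, m < v -> p v = v) ->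
  exists r, [/\ prodn n (rev r) = p, size r = invp p, all (fun a => a < m) r & bf r \/ exc m r].
Proof.
elim: m => [|m IH] hm p hp.
  have p1 : p = 1%g.
    apply/permP => v; rewrite perm1.
    case: (posnP v) => hv; last exact: hp.
    case: (posnP (p v)) => hpv; first by apply: val_inj => /=; rewrite hpv hv.
    by apply: (perm_inj (s:=p)); rewrite hp.
  exists [::]; split => //; first by rewrite p1 prodn_nil.
  - by rewrite p1 invp1.
  - by left.
pose M : 'I_n.+1 := inord m.+1.
have vM : (M : nat) = m.+1 by rewrite /M inordK //; lia.
set k := (p M : nat).
have hk : k <= m.+1.
  rewrite leqNgt; apply/negP => h.
  have := hp (p M) h => /perm_inj e.
  by move: h; rewrite /k e vM ltnn.
set L := m.+1 - k.
set ch := rev (iota k L).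
have hchn : all (fun a => a < n) ch by rewrite all_rev; apply: all_iota => a ha; lia.
set p' := (p * (prodn n ch)^-1)%g.
have hpp : (p' * prodn n ch)%g = p by rewrite /p' mulgVK.
have hp' : forall v : 'I_n.+1, m < v -> p' v = v.
  move=> v hv.
  have e : prodn n ch v = p v.
    apply: val_inj; rewrite /= prodn_chain_val; last by lia.
    case: (eqVneq (v : nat) m.+1) => ev.
    - have -> : v = M by apply: val_inj => /=; rewrite ev vM.
      rewrite /G /L -/k ifT //; apply/eqP; lia.
    - rewrite hp; last by lia.
      rewrite /G; case: ifP => [/eqP|_]; first lia.
      by case: ifP => // /andP[h1 h2]; lia.
  apply: (perm_inj (s:=prodn n ch)); rewrite e -[in RHS]hpp permM //.
have [r' [hr1 hr2 hr3 hr4]] := IH (ltnW hm) p' hp'.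
have hinv : invp p = invp p' + L.
  have ek : k = m.+1 - L by rewrite /L; lia.
  rewrite -hpp /ch ek chain_inv //; lia.
have naa : forall u a v, rev r' = u ++ a :: a :: v -> False.
  move=> u a v e; apply: (@no_aa n u a v); rewrite -e size_rev hr1; exact: hr2.
have [r [h1 h2 h3 h4]] := step_words hm hk hr3 naa hr4.
exists r; split => //.
- by rewrite h1 prodn_cat hr1.
- by rewrite h2 hinv hr2.
Qed.


Fixpoint T (P : nat -> nat) (x : seq nat) : seq (nat * nat) :=
  if x is i :: x' then (P i, P i.+1) :: T (fun v => P (sw i v)) x' else [::].

Fixpoint pre (P : nat -> nat) (x : seq nat) : nat -> nat :=
  if x is i :: x' then pre (fun v => P (sw i v)) x' else P.

Lemma T_ext x P Q : P =1 Q -> T P x = T Q x.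
Proof.
elim: x P Q => [|i x IH] P Q h //=; rewrite !h; congr (_ :: _); apply: IH => v; exact: h.
Qed.

Lemma pre_ext x P Q : P =1 Q -> pre P x =1 pre Q x.
Proof. elim: x P Q => [|i x IH] P Q h //=; apply: IH => v; exact: h. Qed.

Lemma T_cat a b P : T P (a ++ b) = T P a ++ T (pre P a) b.
Proof. by elim: a P => [|i a IH] P //=; rewrite IH. Qed.

Lemma inj_sw (P : nat -> nat) i : injective P -> injective (fun v => P (sw i v)).
Proof. move=> hP u v /hP h; by rewrite -(swK i u) h swK. Qed.

Lemma inj_pre x (P : nat -> nat) : injective P -> injective (pre P x).
Proof. elim: x P => [|i x IH] P hP //=; apply: IH; exact: inj_sw. Qed.

Definition meets (u v : nat * nat) : bool :=
  [|| u.1 == v.1, u.1 == v.2, u.2 == v.1 | u.2 == v.2].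

Lemma meetsC u v : meets u v = meets v u.
Proof. by rewrite /meets ![_ == u.1]eq_sym ![_ == u.2]eq_sym; case: eqP; case: eqP; case: eqP; case: eqP. Qed.

Definition pr (s t : nat * nat) := fun u : nat * nat => (u == s) || (u == t).

Definition F s t x := filter (pr s t) (T id x).

Lemma sw_i i : sw i i = i.+1. Proof. by rewrite /sw eqxx. Qed.
Lemma sw_i1 i : sw i i.+1 = i. Proof. by rewrite /sw (gtn_eqF (ltnSn i)) eqxx. Qed.
Lemma sw_other i v : v != i -> v != i.+1 -> sw i v = v.
Proof. by move=> h1 h2; rewrite /sw (negPf h1) (negPf h2). Qed.

Lemma neqs i : ((i.+1 == i) = false /\ (i == i.+1) = false /\ (i.+2 == i) = false) /\
  ((i.+2 == i.+1) = false /\ (i == i.+2) = false /\ (i.+1 == i.+2) = false).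
Proof. repeat split; apply/eqP; lia. Qed.

Lemma T_braid1 P i : T P [:: i; i.+1; i] = [:: (P i, P i.+1); (P i, P i.+2); (P i.+1, P i.+2)].
Proof. by case: (neqs i) => [[e1 [e2 e3]] [e4 [e5 e6]]]; rewrite /= /sw !eqxx ?e1 ?e2 ?e3 ?e4 ?e5 ?e6 /= !eqxx ?e1 ?e2 ?e3 ?e4 ?e5 ?e6. Qed.

Lemma T_braid2 P i : T P [:: i.+1; i; i.+1] = [:: (P i.+1, P i.+2); (P i, P i.+2); (P i, P i.+1)].
Proof. by case: (neqs i) => [[e1 [e2 e3]] [e4 [e5 e6]]]; rewrite /= /sw !eqxx ?e1 ?e2 ?e3 ?e4 ?e5 ?e6 /= !eqxx ?e1 ?e2 ?e3 ?e4 ?e5 ?e6. Qed.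

Lemma pre_braid P i : pre P [:: i; i.+1; i] =1 pre P [:: i.+1; i; i.+1].
Proof.
move=> v /=; congr P; swcase; lia.
Qed.

Lemma T_comm P i j : (i.+1 < j \/ j.+1 < i) -> T P [:: i; j] = [:: (P i, P i.+1); (P j, P j.+1)].
Proof. move=> h /=; rewrite !sw_other //; apply/eqP; lia. Qed.

Lemma pre_comm P i j : (i.+1 < j \/ j.+1 < i) -> pre P [:: i; j] =1 pre P [:: j; i].
Proof. move=> h v /=; congr P; swcase; lia. Qed.

Lemma meets_refl u : meets u u.
Proof. by rewrite /meets eqxx. Qed.

Lemma pr_eq s t u v : ~~ meets s t -> pr s t u -> pr s t v -> meets u v -> u = v.
Proof.
move=> hst; rewrite /pr => /orP[] /eqP -> /orP[] /eqP -> //.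
- by move=> h; rewrite h in hst.
- by rewrite meetsC => h; rewrite h in hst.
Qed.

Lemma pr_ne s t u v : meets s t -> pr s t u -> pr s t v -> ~~ meets u v -> False.
Proof.
move=> hst; rewrite /pr => /orP[] /eqP -> /orP[] /eqP -> //; rewrite ?meets_refl ?hst //.
by rewrite meetsC hst.
Qed.

Lemma filter3 (p : pred (nat * nat)) t1 t2 t3 :
  (forall u v, p u -> p v -> meets u v -> u = v) ->
  meets t1 t2 -> meets t1 t3 -> meets t2 t3 ->
  filter p [:: t1; t2; t3] = filter p [:: t3; t2; t1].
Proof.
move=> H m12 m13 m23 /=.
case h1: (p t1); case h2: (p t2); case h3: (p t3) => //=.
all: first [by rewrite (H _ _ h1 h2 m12) (H _ _ h2 h3 m23) | by rewrite (H _ _ h2 h3 m23) | by rewrite (H _ _ h1 h3 m13) | by rewrite (H _ _ h1 h2 m12)].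
Qed.

Lemma filter2 (p : pred (nat * nat)) t1 t2 :
  (p t1 -> p t2 -> False) -> filter p [:: t1; t2] = filter p [:: t2; t1].
Proof. move=> H /=; case h1: (p t1); case h2: (p t2) => //=; exfalso; exact: H. Qed.

Lemma braid_F s t x y : braid_step x y -> ~~ meets s t -> F s t x = F s t y.
Proof.
move=> [a [b [i H]]] hst; case: H => [[-> ->]|[-> ->]]; rewrite /F !T_cat !filter_cat;
  congr (_ ++ _); (congr (_ ++ _);
  [ rewrite ?T_braid1 ?T_braid2; apply: filter3 => //; try (by move=> u v; exact: pr_eq);
    by rewrite /meets !eqxx ?orbT
  | congr filter; apply: T_ext; try exact: pre_braid; move=> v; symmetry; exact: pre_braid ]).
Qed.

Lemma comm_F s t x y : comm_step x y -> meets s t -> F s t x = F s t y.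
Proof.
move=> [a [b [i [j [hij [-> ->]]]]]] hst; rewrite /F !T_cat !filter_cat; congr (_ ++ _).
have hji : j.+1 < i \/ i.+1 < j by case: hij; [right|left].
congr (_ ++ _).
- rewrite (T_comm _ hij) (T_comm _ hji); apply: filter2 => h1 h2.
  apply: (pr_ne hst h1 h2); rewrite /meets /=.
  have inj := @inj_pre a id (@inj_id nat).
  apply/negP => /or4P [] /eqP /inj; lia.
- congr filter; apply: T_ext; exact: pre_comm.
Qed.

Lemma braid_equiv_F x y : braid_equiv x y -> forall s t, ~~ meets s t -> F s t x = F s t y.
Proof.
elim=> [u v h|u|u v w _ IH1 _ IH2] s t hst //.
- exact: braid_F.
- by rewrite IH1 // IH2.
Qed.

Lemma comm_equiv_F x y : comm_equiv x y -> forall s t, meets s t -> F s t x = F s t y.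
Proof.
elim=> [u v h|u|u v w _ IH1 _ IH2] s t hst //.
- exact: comm_F.
- by rewrite IH1 // IH2.
Qed.

Lemma filter_all_eq (s1 s2 : seq (nat * nat)) :
  (forall a b, filter (pr a b) s1 = filter (pr a b) s2) -> s1 = s2.
Proof.
elim: s1 s2 => [|u s1 IH] [|v s2] H //.
- by have := H v v; rewrite /= /pr eqxx.
- by have := H u u; rewrite /= /pr eqxx.
- have := H u v; rewrite /= /pr !eqxx /= orbT => -[huv _]; subst u.
  congr (_ :: _); apply: IH => a b; have := H a b; rewrite /=.
  by case: ifP => // _ [].
Qed.

Lemma T_inj x y (P : nat -> nat) : injective P -> T P x = T P y -> x = y.
Proof.
elim: x y P => [|i x IH] [|j y] P hP //= [/hP hij _ hT]; subst j.
congr (_ :: _); apply: IH hT; exact: inj_sw.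
Qed.

Lemma braid_comm_eq x y : braid_equiv x y -> comm_equiv x y -> x = y.
Proof.
move=> hb hc; apply: (@T_inj _ _ id) => //.
apply: filter_all_eq => a b.
case hm: (meets a b).
- exact: comm_equiv_F.
- apply: braid_equiv_F => //; by rewrite hm.
Qed.


Lemma pbP (P : Prop) : pb P = true <-> P.
Proof. rewrite /pb; case: excluded_middle_informative => h; split => //. Qed.

Definition crt (s : seq nat -> seq nat -> Prop) := clos_refl_trans _ s.

Lemma crt_sym s : (forall x y, s x y -> s y x) -> forall x y, crt s x y -> crt s y x.
Proof.
move=> hs x y; elim=> [u v h|u|u v w _ IH1 _ IH2].
- by apply: rt_step; apply: hs.
- exact: rt_refl.
- exact: rt_trans IH2 IH1.
Qed.

Definition mv n k (t : k.-tuple 'I_n) := map val (tval t).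

Definition cl n k (A : {set k.-tuple 'I_n}) (r : seq nat -> seq nat -> Prop) (t : k.-tuple 'I_n) :=
  [set u in A | pb (r (map val (tval t)) (map val (tval u)))].

Lemma classesE n k (A : {set k.-tuple 'I_n}) r : Defs.classes A r = [set cl A r t | t in A].
Proof. by []. Qed.

Lemma cl_eq n k (A : {set k.-tuple 'I_n}) s : (forall x y, s x y -> s y x) ->
  forall t u, t \in A -> u \in A -> cl A (crt s) t = cl A (crt s) u <-> crt s (mv t) (mv u).
Proof.
move=> hs t u ht hu; split.
- move=> e; have : u \in cl A (crt s) u by rewrite inE hu /=; apply/pbP; exact: rt_refl.
  by rewrite -e inE => /andP[_ /pbP].
- move=> h; apply/setP => v; rewrite !inE; case: (v \in A) => //=.
  apply/idP/idP => /pbP h2; apply/pbP.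
  + apply: rt_trans h2; exact: crt_sym h.
  + exact: rt_trans h h2.
Qed.

Lemma stuck_eq (s : seq nat -> seq nat -> Prop) x y : (forall y', ~ s x y') -> crt s x y -> x = y.
Proof.
move=> hst /clos_rt_rt1n_iff h; case: h hst => // y0 z0 h _ hst.
by exfalso; apply: (hst y0).
Qed.

Lemma mv_inj n k : injective (@mv n k).
Proof. move=> t u /(inj_map val_inj) e; exact: val_inj. Qed.

Lemma gen_fwd n k (A : {set k.-tuple 'I_n}) s1 s2 :
  (forall x y, s1 x y -> s1 y x) -> (forall x y, s2 x y -> s2 y x) ->
  (forall x y, crt s1 x y -> crt s2 x y -> x = y) ->
  #|Defs.classes A (crt s1)| = 1 -> #|A| = #|Defs.classes A (crt s1)| * #|Defs.classes A (crt s2)|.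
Proof.
move=> h1 h2 hi /eqP/cards1P [X hX]; rewrite hX cards1 mul1n classesE card_in_imset //.
move=> t u ht hu /(cl_eq h2 ht hu) hc; apply: mv_inj; apply: hi => //.
have ct : cl A (crt s1) t \in [set X] by rewrite -hX classesE; apply: imset_f.
have cu : cl A (crt s1) u \in [set X] by rewrite -hX classesE; apply: imset_f.
by apply/(cl_eq h1 ht hu); move: ct cu; rewrite !inE => /eqP -> /eqP ->.
Qed.

Lemma gen_bwd n k (A : {set k.-tuple 'I_n}) s1 s2 z :
  (forall x y, s1 x y -> s1 y x) -> (forall x y, s2 x y -> s2 y x) ->
  (forall x y, crt s1 x y -> crt s2 x y -> x = y) ->
  z \in A -> (forall y, ~ s1 (mv z) y) ->
  #|A| = #|Defs.classes A (crt s1)| * #|Defs.classes A (crt s2)| -> #|Defs.classes A (crt s2)| = 1.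
Proof.
move=> h1 h2 hi hz hstuck hcard.
set B := Defs.classes A (crt s1); set C := Defs.classes A (crt s2).
pose phi t := (cl A (crt s1) t, cl A (crt s2) t).
have hsub : phi @: A \subset setX B C.
  apply/subsetP => x /imsetP [t ht ->]; rewrite inE /=; apply/andP; split; apply: imset_f => //.
have hinj : {in A &, injective phi}.
  move=> t u ht hu [e1 e2]; apply: mv_inj; apply: hi.
  - exact/(cl_eq h1 ht hu).
  - exact/(cl_eq h2 ht hu).
have heq : phi @: A = setX B C.
  apply/eqP; rewrite eqEcard hsub /= card_in_imset // cardsX -hcard //.
have zC : cl A (crt s2) z \in C by apply: imset_f.
have C1 : 0 < #|C| by apply/card_gt0P; exists (cl A (crt s2) z).
apply/eqP; rewrite eqn_leq C1 andbT leqNgt; apply/negP => hC.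
have : 0 < #|C :\ cl A (crt s2) z| by move: (cardsD1 (cl A (crt s2) z) C) hC; rewrite zC add1n => ->.
move=> /card_gt0P [g]; rewrite !inE => /andP [hg gC].
have : (cl A (crt s1) z, g) \in phi @: A by rewrite heq inE /= gC andbT; apply: imset_f.
move=> /imsetP [u hu [e1 e2]].
have /(cl_eq h1 hz hu) hzu : cl A (crt s1) z = cl A (crt s1) u by [].
have ezu : mv z = mv u.
  exact: stuck_eq hstuck hzu.
have uz : u = z by apply: mv_inj.
by move: hg; rewrite e2 uz eqxx.
Qed.


Theorem proposition4p8 (n : nat) (w : 'S_n.+1) :
  #|Rw w| = (#|Bw w| * #|Cw w|)%N <-> #|Bw w| = 1%N \/ #|Cw w| = 1%N.
Proof.
have hbs : forall x y, braid_step x y -> braid_step y x.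
  move=> x y [a [b [i H]]]; exists a, b, i; case: H => [[-> ->]|[-> ->]]; [right|left]; split => //.
have hcs : forall x y, comm_step x y -> comm_step y x.
  move=> x y [a [b [i [j [hij [-> ->]]]]]]; exists a, b, j, i; split => //.
  by case: hij; [right|left].
have hi : forall x y, crt braid_step x y -> crt comm_step x y -> x = y.
  move=> x y h1 h2; exact: braid_comm_eq.
have hi' : forall x y, crt comm_step x y -> crt braid_step x y -> x = y.
  move=> x y h1 h2; exact: braid_comm_eq.
split.
- move=> hcard.
  have hfix : forall v : 'I_n.+1, n < v -> w v = v by move=> v hv; have := ltn_ord v; lia.
  have [r [h1 h2 h3 h4]] := @construct n n (leqnn n) w hfix.
  have hell : ell w = invp w.
    apply: ell_eq; exists (rev r); split => //; first by rewrite size_rev.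
    by rewrite all_rev.
  have hs : size (rev r) = ell w by rewrite size_rev hell.
  have ha : all (fun i => i < n) (rev r) by rewrite all_rev.
  have [t ht] := @seq_tuple n (ell w) (rev r) hs ha.
  have tA : t \in Rw w by rewrite inE prodw_prodn ht h1.
  case: h4 => [hb|[i [hi0 e]]].
  + right; apply: (gen_bwd hbs hcs hi tA _ hcard).
    by move=> y; rewrite /mv ht; exact: bf_no_step.
  + left; apply: (gen_bwd hcs hbs hi' tA _); last by rewrite mulnC.
    move=> y; rewrite /mv ht; apply: cf_no_step; rewrite e /=; lia.
- case=> h.
  + exact: (gen_fwd hbs hcs hi h).
  + rewrite mulnC; exact: (gen_fwd hcs hbs hi' h).
Qed.
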